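(* Let $P,Q$ be nonzero coprime integers with $\Delta:=P^2-4Q\neq0$, such that $\alpha/\beta$ is not a root of unity, where $\alpha,\beta$ are the roots of $x^2-Px+Q$. Let $(U_n)$ be the Lucas sequence $U_n=(\alpha^n-\beta^n)/(\alpha-\beta)$. Then for every positive integer $n$, \[\mathrm{lcm}(U_1,U_2,\dots,U_n)=\mathrm{lcm}\left(U_n,U_{n-1},\dots,U_{n-\lceil n/2\rceil+1}\right).\]
   Context: $U_0=0$, $U_1=1$, $U_{n+2}=PU_{n+1}-QU_n$. *)

(* Defs.v *)
From mathcomp Require Import all_boot all_order all_algebra all_field.
Set Implicit Arguments. Unset Strict Implicit. Unset Printing Implicit Defensive.
Import Order.TTheory GRing.Theory Num.Theory.
Local Open Scope ring_scope.

Fixpoint lucas_pair (P Q : int) (n : nat) : int * int :=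
  match n with
  | 0%N => (0, 1)
  | m.+1 => let: (a, b) := lucas_pair P Q m in (b, P * b - Q * a)
  end.

Definition lucasU (P Q : int) (n : nat) : int := (lucas_pair P Q n).1.

Definition lcmU (P Q : int) (a b : nat) : nat :=
  \big[lcmn/1%N]_(a <= i < b) `|lucasU P Q i|%N.

(* Main.v *)
Require Import Defs.
From mathcomp Require Import all_boot all_order all_algebra all_field.
From mathcomp Require Import zify ring.
Import Order.TTheory GRing.Theory Num.Theory.
Local Open Scope ring_scope.

Lemma lucasU0 P Q : lucasU P Q 0 = 0. Proof. by []. Qed.
Lemma lucasU1 P Q : lucasU P Q 1 = 1. Proof. by []. Qed.

Lemma lucas_pair2 P Q n : (lucas_pair P Q n).2 = lucasU P Q n.+1.
Proof. by rewrite /lucasU /=; case: (lucas_pair P Q n). Qed.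

Lemma lucasU_rec P Q n :
  lucasU P Q n.+2 = P * lucasU P Q n.+1 - Q * lucasU P Q n.
Proof.
rewrite /lucasU /=.
by case: (lucas_pair P Q n) => a b /=.
Qed.

Lemma lucasU_add P Q m n :
  lucasU P Q (m + n).+1 =
  lucasU P Q m.+1 * lucasU P Q n.+1 - Q * lucasU P Q m * lucasU P Q n.
Proof.
have H : forall m, (forall n, lucasU P Q (m + n).+1 =
  lucasU P Q m.+1 * lucasU P Q n.+1 - Q * lucasU P Q m * lucasU P Q n) /\
  (forall n, lucasU P Q (m.+1 + n).+1 =
  lucasU P Q m.+2 * lucasU P Q n.+1 - Q * lucasU P Q m.+1 * lucasU P Q n).
  elim=> [|k [IH1 IH2]].
    split=> j; first by rewrite add0n lucasU1 lucasU0; ring.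
    rewrite add1n lucasU_rec lucasU_rec lucasU1 lucasU0; ring.
  split=> // j.
  have -> : ((k.+2 + j).+1 = (k + j).+3)%N by lia.
  rewrite lucasU_rec.
  have -> : ((k + j).+2 = (k.+1 + j).+1)%N by lia.
  rewrite IH1 IH2.
  rewrite (lucasU_rec P Q k.+1) (lucasU_rec P Q k); ring.
by case: (H m).
Qed.

Lemma lucasU_dvd P Q m k : (lucasU P Q m %| lucasU P Q (k * m))%Z.
Proof.
case: m => [|m]; first by rewrite muln0.
elim: k => [|k IH]; first by rewrite mul0n lucasU0 dvdz0.
rewrite mulSn addnC addnS lucasU_add.
apply: rpredB; first by apply: dvdz_mull; apply: dvdzz.
by apply: dvdz_mulr; apply: dvdz_mull.
Qed.

Lemma biglcm_dvd a b (F : nat -> nat) m :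
  (forall i, (a <= i < b)%N -> F i %| m)%N -> (\big[lcmn/1%N]_(a <= i < b) F i %| m)%N.
Proof.
move=> H; rewrite big_seq.
apply: (big_ind (fun x => x %| m)%N) => //.
  by move=> x y hx hy; rewrite dvdn_lcm hx hy.
by move=> i; rewrite mem_index_iota => /H.
Qed.

Lemma biglcm_sup a b (F : nat -> nat) j :
  (a <= j < b)%N -> (F j %| \big[lcmn/1%N]_(a <= i < b) F i)%N.
Proof.
move=> /andP[h1 h2].
rewrite (big_cat_nat h1 (ltnW h2)) /= (big_ltn h2) /=.
by apply: dvdn_trans (dvdn_lcmr _ _); apply: dvdn_trans (dvdn_lcml _ _).
Qed.

Theorem corollary5 (P Q : int) (alpha beta : algC) :
  P != 0 -> Q != 0 -> coprimez P Q ->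
  P ^+ 2 - 4 * Q != 0 ->
  (* alpha, beta are the roots of x^2 - P x + Q *)
  alpha + beta = P%:~R -> alpha * beta = Q%:~R ->
  (* alpha / beta is not a root of unity *)
  (forall k : nat, (0 < k)%N -> (alpha / beta) ^+ k != 1) ->
  forall n : nat, (0 < n)%N ->
    lcmU P Q 1 n.+1 = lcmU P Q (n - uphalf n).+1 n.+1.
Proof.
move=> _ _ _ _ _ _ _ n n0.
set h := (n - uphalf n)%N.
have hle : (1 <= h.+1)%N by [].
have hle2 : (h.+1 <= n.+1)%N by rewrite ltnS leq_subr.
rewrite /lcmU (big_cat_nat hle hle2) /=.
apply/lcmn_idPr; apply: biglcm_dvd => i /andP[i1 i2].
have ipos : (0 < i)%N by [].
apply: (@dvdn_trans `|lucasU P Q (n %/ i * i)|%N); last apply: (@biglcm_sup _ _ (fun i => `|lucasU P Q i|%N)).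
  by have := lucasU_dvd P Q i (n %/ i); rewrite dvdzE.
have hm := divn_eq n i.
have hr : (n %% i < i)%N by rewrite ltn_mod.
have hu : (h = n./2)%N.
  rewrite /h uphalf_half; have := odd_double_half n; lia.
apply/andP; split.
  move: i2; rewrite ltnS hu => i2.
  have := odd_double_half n. lia.
by rewrite ltnS leq_trunc_div.
Qed.
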